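(* Let $\mathcal{A}\subset\mathbb{Z}$ be a finite alphabet, let $G=(V,E)$ be a finite directed graph with edge labelling $\ell:E\to\mathcal{A}$ whose adjacency matrix $M=\sum_{a\in\mathcal{A}}M_a$ is primitive, let $\beta>1$ be a Pisot number, and let $\phi^+:\mathcal{K}^+\to\mathbb{R}$ be as in the context. Then $\phi^+(\mathcal{K}^+)$ is finite if and only if for every vertex $v\in V$ there exists $c(v)\in\mathbb{R}$ such that for every path $e_1e_2\ldots e_n$ ($n\ge1$) in $G$ connecting $v$ to itself, $$c(v)=\frac{1}{1-\beta^{-n}}\sum_{k=1}^n\frac{\ell(e_k)}{\beta^k}.$$
   Context: For $a\in\mathcal{A}$, $M_a$ is the $V\times V$ matrix with $(M_a)_{ij}=1$ if $(i,j)\in E$ and $\ell((i,j))=a$, and $0$ otherwise. A path is a sequence of edges with the terminal vertex of $e_j$ equal to the initial vertex of $e_{j+1}$; it connects the initial vertex of $e_1$ to the terminal vertex of $e_n$. $\mathcal{K}^+\subseteq\mathcal{A}^{\mathbb{N}}$ is the set of sequences $(\ell(e_k))_{k\ge1}$ for infinite paths $e_1e_2\ldots$ in $G$. A Pisot number is an algebraic integer $>1$ all of whose other Galois conjugates have modulus $<1$ (integers $\ge2$ included). $\phi^+((x_k)_{k\ge1})=\sum_{k\ge1}x_k\beta^{-k}$. *)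

(* Defs.v *)
From HB Require Import structures.
From mathcomp Require Import all_boot all_order all_algebra.
From mathcomp Require Import all_classical all_reals all_analysis.
From mathcomp Require Import complex.
Set Implicit Arguments. Unset Strict Implicit. Unset Printing Implicit Defensive.
Import Order.TTheory GRing.Theory Num.Theory.
Local Open Scope ring_scope.
Local Open Scope classical_set_scope.

(* Vertices are 'I_n; edges E : {set 'I_n * 'I_n} (E ⊆ V×V);
   labelling lab : 'I_n * 'I_n -> int (only its values on E matter). *)

Definition Mlab (n : nat) (E : {set 'I_n * 'I_n}) (lab : 'I_n * 'I_n -> int)
  (a : int) : 'M[int]_n :=
  \matrix_(i, j) (((i, j) \in E) && (lab (i, j) == a))%:R.

Definition adjM (n : nat) (A : seq int) (E : {set 'I_n * 'I_n})
  (lab : 'I_n * 'I_n -> int) : 'M[int]_n :=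
  \sum_(a <- A) Mlab E lab a.

Definition mxpow (n : nat) (M : 'M[int]_n) (k : nat) : 'M[int]_n :=
  iter k (mulmx M) 1%:M.

Definition primitive_mx (n : nat) (M : 'M[int]_n) : Prop :=
  exists k : nat, (0 < k)%N /\ forall i j, 0 < mxpow M k i j.

Definition pisot (R : realType) (beta : R) : Prop :=
  1 < beta /\
  exists p : {poly int},
    [/\ p \is monic,
        irreducible_poly (map_poly (intr : int -> rat) p),
        root (map_poly (intr : int -> R) p) beta &
        forall z : R[i], root (map_poly (intr : int -> R[i]) p) z ->
          z != (beta%:C)%C -> `|z| < 1].

(* K^+ : label sequences of infinite paths. Index shift: x k (k >= 0)
   stands for x_{k+1}, and e k for e_{k+1}. *)
Definition Kplus (n : nat) (E : {set 'I_n * 'I_n}) (lab : 'I_n * 'I_n -> int)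
  : set (nat -> int) :=
  [set x | exists e : nat -> 'I_n * 'I_n,
     [/\ forall k, e k \in E,
         forall k, (e k).2 = (e k.+1).1 &
         x = (fun k => lab (e k))]].

Definition phiplus (R : realType) (beta : R) (x : nat -> int) : R :=
  limn (fun N => \sum_(k < N) ((x k)%:~R * beta ^- k.+1)).

(* e0 :: s is a path (of length size s + 1 >= 1) in G from v to v *)
Definition loop_at (n : nat) (E : {set 'I_n * 'I_n}) (v : 'I_n)
  (e0 : 'I_n * 'I_n) (s : seq ('I_n * 'I_n)) : bool :=
  [&& e0.1 == v, (last e0 s).2 == v, all (fun e => e \in E) (e0 :: s) &
      path (fun e f => e.2 == f.1) e0 s].

(* Main.v *)
Require Import Defs.
From HB Require Import structures.
From mathcomp Require Import all_boot all_order all_algebra.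
From mathcomp Require Import all_classical all_reals all_analysis.
From mathcomp Require Import complex.
From mathcomp Require Import ring lra.
Import Order.TTheory GRing.Theory Num.Theory.
Local Open Scope ring_scope.
Local Open Scope classical_set_scope.

Module Aux.
Import numFieldNormedType.Exports.
Set Implicit Arguments. Unset Strict Implicit.


Section Ana.
Variables (R : realType) (beta : R).
Hypothesis b1 : 1 < beta.

Definition ps (x : nat -> int) (N : nat) : R :=
  \sum_(k < N) ((x k)%:~R * beta ^- k.+1).

Lemma b0 : 0 < beta. Proof. by apply: lt_trans b1. Qed.

Lemma bexpD (N i : nat) : beta ^- (N + i) = beta ^- N * beta ^- i.
Proof. by rewrite exprD invfM. Qed.

Lemma ps_split x N M :
  ps x (N + M) = ps x N + beta ^- N * ps (fun k => x (k + N)%N) M.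
Proof.
rewrite /ps big_split_ord /=; congr (_ + _).
rewrite mulr_sumr; apply: eq_bigr => i _ /=.
by rewrite (addnC i) -addnS bexpD mulrCA.
Qed.

Lemma geo_sum N : \sum_(k < N) beta ^- k.+1 = (1 - beta ^- N) / (beta - 1).
Proof.
have hb : beta - 1 != 0 by rewrite subr_eq0 gt_eqF.
have hb' : beta != 0 by rewrite gt_eqF // b0.
elim: N => [|N IH]; first by rewrite big_ord0 expr0 invr1 subrr mul0r.
rewrite big_ord_recr /= IH.
apply: (mulIf hb); rewrite mulrDl !divfK //.
rewrite exprS invfM; field.
by rewrite hb' andbT expf_neq0.
Qed.

Lemma geo_le N : \sum_(k < N) beta ^- k.+1 <= (beta - 1)^-1.
Proof.
rewrite geo_sum ler_pdivrMr ?subr_gt0 // mulVf ?subr_eq0 ?gt_eqF //.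
by rewrite gerBl invr_ge0 exprn_ge0 // ltW // b0.
Qed.

Lemma ps_bound x (B : R) : (forall k, `|(x k)%:~R : R| <= B) ->
  forall N, `|ps x N| <= B / (beta - 1).
Proof.
move=> hB N; apply: (le_trans (ler_norm_sum _ _ _)).
have B0 : 0 <= B by apply: le_trans (hB 0%N).
apply: (@le_trans _ _ (\sum_(k < N) B * beta ^- k.+1)).
  apply: ler_sum => k _; rewrite normrM (@gtr0_norm _ (beta ^- _)) ?ler_pM2r ?hB //.
  all: try by rewrite ?invr_gt0 ?exprn_gt0 ?b0.
by rewrite -mulr_sumr ler_wpM2l // geo_le.
Qed.


Lemma ps_cvg x (B : R) : (forall k, `|(x k)%:~R : R| <= B) -> cvgn (ps x).
Proof.
move=> hB.
have B0 : 0 <= B by apply: le_trans (hB 0%N).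
have bk k : 0 < beta ^- k by rewrite invr_gt0 exprn_gt0 // b0.
pose u N := \sum_(k < N) (((x k)%:~R + B) * beta ^- k.+1).
pose g N := \sum_(k < N) (B * beta ^- k.+1).
have -> : ps x = u - g.
  apply/funext => N; transitivity (u N - g N); last by [].
  rewrite /ps /u /g -sumrB; apply: eq_bigr => k _.
  by rewrite mulrDl addrK.
apply: is_cvgB.
- apply: nondecreasing_is_cvgn.
    apply/nondecreasing_seqP => N; rewrite /u big_ord_recr /= lerDl.
    apply: mulr_ge0; last exact: ltW.
    by rewrite -lerBlDr sub0r; have := hB N; rewrite ler_norml => /andP[].
  exists ((B + B) / (beta - 1)) => _ [N _ <-].
  rewrite /u (@le_trans _ _ (\sum_(k < N) ((B + B) * beta ^- k.+1))) //.
    apply: ler_sum => k _; rewrite ler_pM2r // lerD2r.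
    by have := hB k; rewrite ler_norml => /andP[].
  by rewrite -mulr_sumr ler_wpM2l ?addr_ge0 // geo_le.
- apply: nondecreasing_is_cvgn.
    apply/nondecreasing_seqP => N; rewrite /g big_ord_recr /= lerDl.
    by apply: mulr_ge0 => //; exact: ltW.
  exists (B / (beta - 1)) => _ [N _ <-].
  by rewrite /g -mulr_sumr ler_wpM2l // geo_le.
Qed.

Lemma phi_shift x (B : R) N : (forall k, `|(x k)%:~R : R| <= B) ->
  phiplus beta x = ps x N + beta ^- N * phiplus beta (fun k => x (k + N)%N).
Proof.
move=> hB.
have hB' : forall k, `|(x (k + N)%N)%:~R : R| <= B by move=> k; exact: hB.
have cy := ps_cvg hB'.
change (limn (ps x) = ps x N + beta ^- N * limn (ps (fun k => x (k + N)%N))).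
apply: cvg_lim; first exact: Rhausdorff.
rewrite -(cvg_shiftn N).
have -> : (fun n => ps x (n + N)) = (fun n => ps x N + beta ^- N * ps (fun k => x (k + N)%N) n).
  by apply/funext => n; rewrite addnC ps_split.
apply: cvgD; first exact: cvg_cst.
by apply: cvgM; [exact: cvg_cst | exact: cy].
Qed.

Lemma phi_bound x (B : R) : (forall k, `|(x k)%:~R : R| <= B) ->
  `|phiplus beta x| <= B / (beta - 1).
Proof.
move=> hB; have cx := ps_cvg hB; have hb := ps_bound hB.
rewrite ler_norml; apply/andP; split.
  apply: limr_ge => //; apply: nearW => N.
  by have := hb N; rewrite ler_norml => /andP[].
apply: limr_le => //; apply: nearW => N.
by have := hb N; rewrite ler_norml => /andP[].
Qed.

End Ana.


Section Comb.
Variables (n : nat) (E : {set 'I_n * 'I_n}) (lab : 'I_n * 'I_n -> int).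
Local Notation edge := ('I_n * 'I_n)%type.

Definition valid (e : nat -> edge) :=
  (forall k, e k \in E) /\ (forall k, (e k).2 = (e k.+1).1).

Lemma valid_K e : valid e -> Kplus E lab (fun k => lab (e k)).
Proof. by case=> h1 h2; exists e; split. Qed.

Section Loop.
Variables (v : 'I_n) (e0 : edge) (s : seq edge).
Hypothesis hl : loop_at E v e0 s.

Lemma loop_mem j : nth e0 (e0 :: s) j \in E.
Proof.
move: hl => /and4P[_ _ /allP ha _].
have [hj|hj] := ltnP j (size (e0 :: s)); first by apply: ha; apply: mem_nth.
by rewrite nth_default //; apply: ha; rewrite inE eqxx.
Qed.

Lemma loop_step j : (j < size s)%N ->
  (nth e0 (e0 :: s) j).2 = (nth e0 (e0 :: s) j.+1).1.
Proof.
move: hl => /and4P[_ _ _ /(pathP e0) hp] hj.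
by apply/eqP; apply: hp.
Qed.

Lemma loop_last : (nth e0 (e0 :: s) (size s)).2 = v.
Proof.
move: hl => /and4P[_ /eqP hv _ _].
by rewrite -hv -[X in nth _ _ X]/((size (e0 :: s)).-1) nth_last.
Qed.

Lemma loop_first : (nth e0 (e0 :: s) 0).1 = v.
Proof. by move: hl => /and4P[/eqP ? _ _ _]. Qed.

Definition pre (f : nat -> edge) (i : nat) : edge :=
  if (i < (size s).+1)%N then nth e0 (e0 :: s) i else f (i - (size s).+1)%N.

Lemma pre_valid f : valid f -> (f 0%N).1 = v -> valid (pre f) /\ (pre f 0%N).1 = v.
Proof.
move=> [f1 f2] f0; split; last by rewrite /pre /= loop_first.
split=> k; rewrite /pre.
  by case: ifP => _; [exact: loop_mem | exact: f1].
case: (ltngtP k.+1 (size s).+1) => hk.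
- by rewrite loop_step // -ltnS.
- by rewrite subSn ?f2 // -ltnS.
- move: hk => [hk]; rewrite hk subnn loop_last //.
Qed.

Definition per (i : nat) : edge := nth e0 (e0 :: s) (i %% (size s).+1).

Lemma per_valid : valid per /\ (per 0%N).1 = v.
Proof.
split; last by rewrite /per mod0n loop_first.
split=> k; rewrite /per; first exact: loop_mem.
have hj : (k %% (size s).+1 < (size s).+1)%N by rewrite ltn_mod.
have -> : (k.+1 %% (size s).+1 = (k %% (size s).+1).+1 %% (size s).+1)%N.
  by rewrite -addn1 -modnDml addn1.
move: hj; rewrite ltnS leq_eqVlt => /orP[/eqP ->|hj].
  by rewrite modnn loop_last loop_first.
by rewrite (@modn_small (k %% (size s).+1).+1) // loop_step.
Qed.

End Loop.
End Comb.


Section Val.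
Variables (n : nat) (E : {set 'I_n * 'I_n}) (lab : 'I_n * 'I_n -> int).
Variables (R : realType) (beta : R).
Hypothesis b1 : 1 < beta.
Local Notation edge := ('I_n * 'I_n)%type.

Definition lv (e0 : edge) s : R := (1 - beta ^- (size s).+1)^-1 *
  \sum_(k < (size s).+1) ((lab (nth e0 (e0 :: s) k))%:~R * beta ^- k.+1).

Definition Bl : R := \sum_(p : edge) `|(lab p)%:~R : R|.

Lemma lab_bound p : `|(lab p)%:~R : R| <= Bl.
Proof.
rewrite /Bl (bigD1 p) //= lerDl; apply: sumr_ge0 => *; exact: normr_ge0.
Qed.

Lemma r_lt1 m : (0 < m)%N -> beta ^- m < 1.
Proof.
move=> hm; rewrite invf_lt1 ?exprn_gt0 ?(b0 b1) //.
by rewrite exprn_egt1 // -lt0n.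
Qed.

Lemma phi_pre e0 s (f : nat -> edge) :
  phiplus beta (fun k => lab (pre e0 s f k)) =
  ps beta (fun k => lab (nth e0 (e0 :: s) k)) (size s).+1 +
  beta ^- (size s).+1 * phiplus beta (fun k => lab (f k)).
Proof.
rewrite (@phi_shift R beta b1 _ _ (size s).+1 (fun k => lab_bound _)).
congr (_ + _ * _).
  by apply: eq_bigr => i _; rewrite /pre ltn_ord.
congr (phiplus _ _); apply/funext => k.
by rewrite /pre ltnNge leq_addl /= addnK.
Qed.

Lemma phi_per e0 s :
  phiplus beta (fun k => lab (per e0 s k)) = lv e0 s.
Proof.
set m := (size s).+1.
have h := @phi_shift R beta b1 _ _ m (fun k => lab_bound (per e0 s k)).
have e1 : (fun k => lab (per e0 s (k + m))) = (fun k => lab (per e0 s k)).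
  by apply/funext => k; rewrite /per modnDr.
have e2 : ps beta (fun k => lab (per e0 s k)) m =
   \sum_(k < m) ((lab (nth e0 (e0 :: s) k))%:~R * beta ^- k.+1).
  by apply: eq_bigr => i _; rewrite /per modn_small.
rewrite e1 e2 in h; rewrite /lv -/m.
have hr : 1 - beta ^- m != 0 by rewrite subr_eq0 eq_sym lt_eqF // r_lt1.
apply: (mulfI hr); rewrite mulrA mulfV // mul1r.
by rewrite mulrBl mul1r {1}h; ring.
Qed.


Lemma loops_eq v e0 s f0 t :
  finite_set (phiplus beta @` Kplus E lab) ->
  loop_at E v e0 s -> loop_at E v f0 t -> lv e0 s = lv f0 t.
Proof.
move=> hfin hP hQ.
set m := (size s).+1.
set r := beta ^- m.
have r1 : r < 1 by apply: r_lt1.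
have r0 : 0 < r by rewrite invr_gt0 exprn_gt0 // (b0 b1).
have hr : 1 - r != 0 by rewrite subr_eq0 eq_sym lt_eqF.
pose w k := iter k (pre e0 s) (per f0 t).
have wv : forall k, valid E (w k) /\ (w k 0%N).1 = v.
  elim=> [|k [IH1 IH2]]; first exact: per_valid hQ.
  have := pre_valid hP IH1 IH2. rewrite /w /=. by move=> H; exact H.
pose f k := phiplus beta (fun i => lab (w k i)).
have hS : ps beta (fun k => lab (nth e0 (e0 :: s) k)) m = (1 - r) * lv e0 s.
  by rewrite /lv -/m -/r mulrA mulfV // mul1r.
have wphi : forall k, f k - lv e0 s = r ^+ k * (lv f0 t - lv e0 s).
  elim=> [|k IH]; first by rewrite /f /= phi_per expr0 mul1r.
  rewrite /f /= phi_pre -/m hS -/r exprS -mulrA -IH /f.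
  ring.
apply/eqP; apply: contraT => hne.
have hd : lv f0 t - lv e0 s != 0 by rewrite subr_eq0 eq_sym.
have finj : injective f.
  move=> k j hkj.
  have : r ^+ k * (lv f0 t - lv e0 s) = r ^+ j * (lv f0 t - lv e0 s).
    by rewrite -!wphi hkj.
  by move/(mulIf hd); apply: ieexprIn => //; rewrite lt_eqF.
exfalso; apply: infinite_nat.
have -> : [set: nat] = f @^-1` (phiplus beta @` Kplus E lab).
  apply/seteqP; split => // k _ /=.
  by exists (fun i => lab (w k i)) => //; apply: valid_K; case: (wv k).
by apply: finite_preimage => // k j _ _; apply: finj.
Qed.

End Val.


Section Pth.
Variables (n : nat) (A : seq int) (E : {set 'I_n * 'I_n}) (lab : 'I_n * 'I_n -> int).
Local Notation edge := ('I_n * 'I_n)%type.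
Local Notation M := (adjM A E lab).

Lemma adj_edge i j : M i j != 0 -> (i, j) \in E.
Proof.
move=> h; apply/negPn/negP => hE; move: h.
rewrite /adjM summxE big1 ?eqxx // => a _.
by rewrite mxE (negbTE hE).
Qed.

Lemma pow_path k i j : mxpow M k.+1 i j != 0 ->
  exists q0 qs, [/\ q0.1 = i, (last q0 qs).2 = j,
     all (fun e => e \in E) (q0 :: qs) &
     path (fun e f : edge => e.2 == f.1) q0 qs].
Proof.
elim: k i j => [|k IH] i j.
  rewrite /mxpow /= mulmx1 => h.
  by exists (i, j), [::]; rewrite /= adj_edge.
rewrite [mxpow M k.+2]/mxpow iterS -/(mxpow M k.+1) mxE.
case: (pickP (fun l => M i l * mxpow M k.+1 l j != 0)) => [l|h0]; last first.
  by rewrite big1 ?eqxx // => l _; move/negbFE: (h0 l) => /eqP.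
rewrite mulf_eq0 negb_or => /andP[h1 h2] _.
have [q0 [qs [a1 a2 a3 a4]]] := IH _ _ h2.
exists (i, l), (q0 :: qs); split => //=.
  by rewrite adj_edge // a3.
by rewrite a1 eqxx a4.
Qed.

End Pth.

Section Dir2.
Variables (n : nat) (A : seq int) (E : {set 'I_n * 'I_n}) (lab : 'I_n * 'I_n -> int).
Variables (R : realType) (beta : R).
Hypothesis b1 : 1 < beta.
Local Notation edge := ('I_n * 'I_n)%type.
Variable c : 'I_n -> R.
Hypothesis hc : forall v e0 s, loop_at E v e0 s -> c v = lv lab beta e0 s.
Hypothesis hprim : primitive_mx (adjM A E lab).

Lemma edge_rel p : p \in E ->
  c p.1 = (lab p)%:~R * beta^-1 + beta^-1 * c p.2.
Proof.
move=> hp.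
have [[|k] [hk hpos]] := hprim; first by [].
have := hpos p.2 p.1; rewrite lt0r => /andP[hne _].
have [q0 [qs [a1 a2 a3 a4]]] := pow_path hne.
move: a3 => /= /andP[a3 a3'].
have l1 : loop_at E p.1 p (q0 :: qs).
  by rewrite /loop_at /= eqxx a2 eqxx hp /= a3 a3' a1 eqxx a4.
have l2 : loop_at E p.2 q0 (rcons qs p).
  rewrite /loop_at /= a1 eqxx last_rcons eqxx /=.
  rewrite all_rcons hp /=; rewrite a3 a3' /=.
  by rewrite rcons_path a4 a2 eqxx.
rewrite (hc l1) (hc l2) /lv /= size_rcons.
set L := size qs.
set g := fun k : nat => (lab (nth q0 (q0 :: qs) k))%:~R : R.
set T := \sum_(k < L.+1) (g k * beta ^- k.+1).
have hb : beta != 0 by rewrite gt_eqF // (b0 b1).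
have hr : 1 - beta ^- L.+2 != 0.
  by rewrite subr_eq0 eq_sym lt_eqF // r_lt1.
have S1 : \sum_(k < L.+2) ((lab (nth p [:: p, q0 & qs] k))%:~R * beta ^- k.+1)
   = (lab p)%:~R * beta^-1 + beta^-1 * T.
  rewrite big_ord_recl /= expr1; congr (_ + _).
  rewrite /T mulr_sumr; apply: eq_bigr => i _.
  rewrite /g /bump /= add0n (set_nth_default q0) ?ltn_ord //.
  by rewrite exprS invfM; ring.
have S2 : \sum_(k < L.+2) ((lab (nth q0 (q0 :: rcons qs p) k))%:~R * beta ^- k.+1)
   = T + (lab p)%:~R * beta ^- L.+2.
  rewrite big_ord_recr /=; congr (_ + _).
    apply: eq_bigr => i _.
    by rewrite /g -[q0 :: rcons qs p]/(rcons (q0 :: qs) p) nth_rcons /= ltn_ord.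
  by rewrite nth_rcons ltnn eqxx.
rewrite S1 S2.
have -> : beta ^- L.+2 = beta^-1 * beta ^- L.+1 by rewrite exprS invfM.
have hr' : 1 - beta^-1 * beta ^- L.+1 != 0 by rewrite -invfM -exprS.
field.
by rewrite expf_neq0 // hb -exprS subr_eq0 gt_eqF // exprn_egt1.
Qed.


Lemma phi_valid e : valid E e ->
  phiplus beta (fun k => lab (e k)) = c (e 0%N).1.
Proof.
move=> [e1 e2].
have hb : beta != 0 by rewrite gt_eqF // (b0 b1).
have hN : forall N, c (e 0%N).1 =
    ps beta (fun k => lab (e k)) N + beta ^- N * c (e N).1.
  elim=> [|N IH]; first by rewrite /ps big_ord0 expr0 invr1 mul1r add0r.
  rewrite IH /ps big_ord_recr /= (edge_rel (e1 N)) e2 exprS invfM.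
  by field; rewrite expf_neq0.
set d := phiplus beta (fun k => lab (e k)) - c (e 0%N).1.
set K := Bl lab R / (beta - 1) + \sum_(v : 'I_n) `|c v|.
have hK : forall N, `|d| <= K * (beta^-1) ^+ N.
  move=> N.
  rewrite /d (@phi_shift R beta b1 _ _ N (fun k => @lab_bound _ lab R (e k))) (hN N).
  have sub_eq : forall a b bb : R, a + b - (a + bb) = b - bb by move=> *; ring.
  have bN : 0 <= beta ^- N by rewrite invr_ge0 exprn_ge0 // ltW // (b0 b1).
  rewrite sub_eq -mulrBr normrM exprVn mulrC (ger0_norm bN); apply: ler_wpM2r => //.

  rewrite (@le_trans _ _ (`|phiplus beta (fun k => lab (e (k + N)%N))| + `|c (e N).1|)) //.
    exact: ler_normB.
  apply: lerD.
    by apply: phi_bound => // k; exact: (@lab_bound _ lab R).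
  by rewrite (bigD1 (e N).1) //= lerDl; apply: sumr_ge0 => *.
have cv : (fun N => K * (beta^-1) ^+ N) @ \oo --> (0 : R).
  rewrite -(mulr0 K); apply: cvgM; first exact: cvg_cst.
  apply: cvg_expr; rewrite ger0_norm ?invr_ge0 ?ltW ?(b0 b1) //.
  by rewrite invf_lt1 ?(b0 b1).
have : `|d| <= 0.
  rewrite -(cvg_lim (@Rhausdorff R) cv); apply: limr_ge.
    by apply/cvg_ex; exists 0.
  by apply: nearW.
rewrite normr_le0 subr_eq0 => /eqP //.
Qed.

End Dir2.

End Aux.
Import Aux.

Theorem theorem7 (R : realType) (n : nat) (A : seq int)
  (E : {set 'I_n * 'I_n}) (lab : 'I_n * 'I_n -> int) (beta : R) :
  uniq A ->
  (forall e, e \in E -> lab e \in A) ->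
  primitive_mx (adjM A E lab) ->
  pisot beta ->
  finite_set (phiplus beta @` Kplus E lab) <->
  (forall v : 'I_n, exists c : R,
     forall (e0 : 'I_n * 'I_n) (s : seq ('I_n * 'I_n)),
       loop_at E v e0 s ->
       c = (1 - beta ^- (size s).+1)^-1 *
           \sum_(k < (size s).+1) ((lab (nth e0 (e0 :: s) k))%:~R * beta ^- k.+1)).
Proof.
move=> _ _ hprim [b1 _]; split.
  move=> hfin v.
  case: (pselect (exists e0 s, loop_at E v e0 s)) => [[e0 [s hl]]|hno].
    exists (lv lab beta e0 s) => f0 t hl'.
    exact: (loops_eq b1 hfin hl hl').
  by exists 0 => e0 s hl; exfalso; apply: hno; exists e0, s.
move=> hc.
have [c hc'] := choice hc.
apply: (@sub_finite_set _ _ (c @` [set: 'I_n])); last first.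
  exact: finite_image.
move=> _ [x [e [e1 e2 ->]] <-].
exists (e 0%N).1 => //.
by rewrite (phi_valid b1 (c := c) _ hprim).
Qed.
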